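(* For every mixed graph $G$ without directed cycles, $\mathrm{nd}_{\mathrm m}(G)\le\mathrm{vc}(G)+4^{\mathrm{vc}(G)}$, where $\mathrm{vc}(G)$ is the vertex cover number of the underlying undirected graph.
   Context: A mixed graph $G$ consists of a finite vertex set $V(G)$, a set $E(G)$ of undirected edges and a set $A(G)$ of directed arcs; it is simple and contains no directed cycle. $N^+(v)$, $N^-(v)$, $N^{\mathrm u}(v)$ denote out-, in- and undirected neighbors. Vertices $u,v$ have the same mixed type if $N^{\mathrm u}(u)\setminus\{v\}=N^{\mathrm u}(v)\setminus\{u\}$, $N^-(u)=N^-(v)$, $N^+(u)=N^+(v)$; $\mathrm{nd}_{\mathrm m}(G)$ is the number of mixed types. The underlying undirected graph replaces every arc by an edge. *)

(* Defs.v *)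
From mathcomp Require Import all_boot.
Set Implicit Arguments. Unset Strict Implicit. Unset Printing Implicit Defensive.

(* A mixed graph on a finite vertex type T: [ue] is the undirected-edge
   relation, [arc] the arc relation ([arc u v] = arc from u to v). *)
Definition mixed_graph (T : finType) (ue arc : rel T) : Prop :=
  [/\ symmetric ue, irreflexive ue, irreflexive arc,
      (forall u v, arc u v -> ~~ arc v u) &
      (forall u v, ue u v -> ~~ arc u v)].

Definition no_directed_cycle (T : finType) (arc : rel T) : Prop :=
  forall x y, arc x y -> ~~ connect arc y x.

Definition Nu (T : finType) (ue : rel T) (v : T) : {set T} := [set w | ue v w].
Definition Nout (T : finType) (arc : rel T) (v : T) : {set T} := [set w | arc v w].
Definition Nin (T : finType) (arc : rel T) (v : T) : {set T} := [set w | arc w v].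

Definition same_mixed_type (T : finType) (ue arc : rel T) (u v : T) : bool :=
  [&& Nu ue u :\ v == Nu ue v :\ u,
      Nin arc u == Nin arc v &
      Nout arc u == Nout arc v].

(* number of mixed types = number of classes of the (equivalence) relation *)
Definition nd_m (T : finType) (ue arc : rel T) : nat :=
  #|[set [set v | same_mixed_type ue arc u v] | u : T]|.

Definition underlying (T : finType) (ue arc : rel T) : rel T :=
  fun u v => [|| ue u v, arc u v | arc v u].

Definition vertex_cover (T : finType) (e : rel T) (S : {set T}) : bool :=
  [forall u, forall v, e u v ==> (u \in S) || (v \in S)].

Definition vc_number (T : finType) (e : rel T) : nat :=
  \big[minn/#|T|]_(S : {set T} | vertex_cover e S) #|S|.
(* setT is always a cover of size #|T|, so the default #|T| is harmless *)

(* Main.v *)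
Require Import Defs.
From mathcomp Require Import all_boot.
Set Implicit Arguments. Unset Strict Implicit. Unset Printing Implicit Defensive.

Section Proof.
Variables (T : finType) (ue arc : rel T).
Hypothesis G : mixed_graph ue arc.

Let cls (u : T) : {set T} := [set v | same_mixed_type ue arc u v].

Lemma cls_eq u v : Nu ue u = Nu ue v -> Nin arc u = Nin arc v ->
  Nout arc u = Nout arc v -> ~~ ue u v -> cls u = cls v.
Proof.
case: G => sym irr _ _ _ Eu Ei Eo nuv.
have [<-//|uv] := eqVneq u v.
have nvu : ~~ ue v u by rewrite sym.
apply/setP=> w; rewrite !inE /same_mixed_type Ei Eo; congr (_ && _).
have uNu : u \notin Nu ue u by rewrite inE irr.
have vNu : v \notin Nu ue u by rewrite inE.
have uNv : u \notin Nu ue v by rewrite -Eu.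
have vNv : v \notin Nu ue v by rewrite -Eu.
have D x (A : {set T}) : x \notin A -> A :\ x = A.
  by move=> xA; apply/setP=> y; rewrite !inE; case: eqP => // ->; rewrite (negbTE xA).
have [->|wu] := eqVneq w u.
  by rewrite eqxx D // D // Eu eqxx.
have [->|wv] := eqVneq w v.
  by rewrite eqxx D // D // Eu eqxx.
rewrite Eu.
case: (boolP (ue w u)) => wuE.
  have wvE : ue w v.
    have : w \in Nu ue v by rewrite -Eu inE sym.
    by rewrite inE sym.
  have -> : (Nu ue v :\ w == Nu ue w :\ u) = false.
    apply/negbTE/negP=> /eqP/setP/(_ v); rewrite !in_setD1 (negbTE (vNv)) andbF.
    by rewrite eq_sym (negbTE uv) inE wvE.
  apply/esym/negbTE/negP=> /eqP/setP/(_ u); rewrite !in_setD1 (negbTE uNv) andbF.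
  by rewrite (negbTE uv) inE wuE.
have wvE : ~~ ue w v.
  apply/negP=> h; have : w \in Nu ue u by rewrite Eu inE sym.
  by rewrite inE sym (negbTE wuE).
by rewrite (D u) ?(D v) // inE.
Qed.

Let code (u x : T) : nat :=
  if ue u x then 1 else if arc x u then 2 else if arc u x then 3 else 0.

Lemma code_lt u x : code u x < 4.
Proof. by rewrite /code; case: (ue u x); case: (arc x u); case: (arc u x). Qed.

Lemma code_dec u x : [/\ ue u x = (code u x == 1), arc x u = (code u x == 2)
  & arc u x = (code u x == 3)].
Proof.
case: G => sym irr airr asym uearc.
rewrite /code; case: (boolP (ue u x)) => h.
  have h1 := uearc _ _ h.
  have h2 : ~~ arc x u by apply: uearc; rewrite sym.
  by rewrite (negbTE h1) (negbTE h2).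
case: (boolP (arc x u)) => h'.
  by rewrite (negbTE (asym _ _ h')).
by case: (arc u x).
Qed.

Let sg (S : {set T}) (u : T) : {ffun T -> 'I_4} :=
  [ffun x => if x \in S then inord (code u x) else ord0].

Lemma sg_eq S u v : vertex_cover (underlying ue arc) S ->
  u \notin S -> v \notin S -> sg S u = sg S v -> cls u = cls v.
Proof.
move=> /forallP cov uS vS E.
have cov' a b : b \notin S -> a \notin S -> underlying ue arc a b = false.
  move=> bS aS; apply/negbTE/negP=> h.
  by move: (forallP (cov a) b); rewrite h /= (negbTE aS) (negbTE bS).
have C x : code u x = code v x.
  case: (boolP (x \in S)) => xS.
    have := congr1 (fun f : {ffun T -> 'I_4} => val (f x)) E.
    by rewrite /= !ffunE xS !inordK ?code_lt.
  move: (cov' _ _ xS uS) (cov' _ _ xS vS); rewrite /underlying /code.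
  by case: (ue u x); case: (arc x u); case: (arc u x);
     case: (ue v x); case: (arc x v); case: (arc v x).
apply: cls_eq.
- by apply/setP=> x; rewrite !inE; case: (code_dec u x) => -> _ _; case: (code_dec v x) => -> _ _; rewrite C.
- by apply/setP=> x; rewrite !inE; case: (code_dec u x) => _ -> _; case: (code_dec v x) => _ -> _; rewrite C.
- by apply/setP=> x; rewrite !inE; case: (code_dec u x) => _ _ ->; case: (code_dec v x) => _ _ ->; rewrite C.
- by move: (cov' _ _ vS uS); rewrite /underlying; case: (ue u v).
Qed.

Lemma bound S : vertex_cover (underlying ue arc) S ->
  #|[set [set v | same_mixed_type ue arc u v] | u : T]| <= #|S| + 4 ^ #|S|.
Proof.
move=> cov.
have -> : [set [set v | same_mixed_type ue arc u v] | u : T] = cls @: [set: T].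
  by apply/setP=> X; apply/imsetP/imsetP => -[u _ ->]; exists u.
have -> : [set: T] = S :|: ~: S by rewrite setUCr.
rewrite imsetU; apply: leq_trans (leq_card_setU _ _) _.
apply: leq_add; first exact: leq_imset_card.
pose g (s : {ffun T -> 'I_4}) :=
  if [pick u in ~: S | sg S u == s] is Some u then cls u else set0.
have sub1 : (cls @: ~: S) \subset (g @: (sg S @: ~: S)).
  apply/subsetP=> _ /imsetP[u uS ->]; apply/imsetP; exists (sg S u).
    by apply/imsetP; exists u.
  rewrite /g; case: pickP => [u' /andP[u'S /eqP e]|/(_ u)]; last by rewrite uS eqxx.
  by apply: sg_eq cov _ _ _; rewrite -?in_setC // e.
apply: leq_trans (subset_leq_card sub1) _.
apply: leq_trans (leq_imset_card _ _) _.
have sub2 : (sg S @: ~: S) \subset pffun_on ord0 S [set: 'I_4].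
  apply/subsetP=> _ /imsetP[u _ ->]; apply/pffun_onP; split.
    by apply/subsetP=> x; rewrite inE ffunE; case: (x \in S).
  by move=> y _; rewrite inE.
by apply: leq_trans (subset_leq_card sub2) _; rewrite card_pffun_on cardsT card_ord.
Qed.

End Proof.

Theorem mainTheorem16 (T : finType) (ue arc : rel T) :
  mixed_graph ue arc -> no_directed_cycle arc ->
  nd_m ue arc <= vc_number (underlying ue arc) + 4 ^ vc_number (underlying ue arc).
Proof.
move=> G _; rewrite /vc_number.
elim/big_ind: _.
- rewrite /nd_m. apply: leq_trans (leq_imset_card _ _) _.
  by rewrite leq_addr.
- by move=> x y hx hy; rewrite /minn; case: ifP.
- by move=> S cov; apply: bound.
Qed.
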